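(* Let $k$ be a field, $\Gamma=(V,E)$ a finite connected quiver, $I\subseteq R^2$ a two-sided ideal of $k\Gamma$, and let $q$ be a path with $h(q)=t(q)=v_0$. Then $$D_{\overline{q}}=\sum_{p\in E,\ t(p)=v_0}D_{p,\overline{qp}}-\sum_{r\in E,\ h(r)=v_0}D_{r,\overline{rq}}.$$
   Context: For a path $p$, $t(p),h(p)$ are its start and end vertex; paths multiply by left-to-right concatenation (product $0$ if they do not concatenate). $R$ is the ideal generated by $E$ and $\overline{x}=x+I$. A differential operator from $k\Gamma$ to $k\Gamma/I$ is a $k$-linear map $D$ with $D(xy)=D(x)\overline{y}+\overline{x}D(y)$. For $m\in k\Gamma/I$, $D_m$ denotes the differential operator $x\mapsto m\overline{x}-\overline{x}m$. For an arrow $r$ and a path $s$ with the same start and end vertices as $r$, $D_{r,\overline{s}}$ is the unique differential operator $k\Gamma\to k\Gamma/I$ with $D_{r,\overline{s}}(r)=\overline{s}$ and vanishing on all other arrows and all vertices. *)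

(* Defs.v *)
From HB Require Import structures.
From mathcomp Require Import all_boot all_order all_algebra.
From mathcomp Require Import finmap.
From mathcomp.multinomials Require Import monalg.
Set Implicit Arguments. Unset Strict Implicit. Unset Printing Implicit Defensive.
Import GRing.Theory.
Local Open Scope ring_scope.

Section Quiver.
Variables (V E : finType) (t h : E -> V).

Definition quiver_adj : rel V :=
  fun u w => [exists e : E, ((t e == u) && (h e == w)) || ((t e == w) && (h e == u))].
Definition quiver_connected : Prop := forall u w : V, connect quiver_adj u w.

(** Raw paths: a start vertex and a sequence of arrows, left-to-right.
    (v, [::]) is the trivial path e_v; (v, e1 :: ... :: en) is a path
    with t(e1) = v and h(e_i) = t(e_{i+1}). *)
Definition valid_path (x : V * seq E) : bool :=
  match x.2 with
  | [::] => true
  | e :: s => (t e == x.1) && path (fun a b => h a == t b) e s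
  end.

Definition qpath := {x : V * seq E | valid_path x}.

Definition tP (p : qpath) : V := (val p).1.
Definition hP (p : qpath) : V := last (val p).1 (map h (val p).2).

Definition vpath (v : V) : qpath := @exist _ valid_path (v, [::]) isT.
Lemma arr_valid (e : E) : valid_path (t e, [:: e]).
Proof. by rewrite /valid_path /= eqxx. Qed.
Definition apath (e : E) : qpath := exist _ (t e, [:: e]) (arr_valid e).

Definition pcat (p q : qpath) : option qpath :=
  if hP p == tP q then insub ((val p).1, (val p).2 ++ (val q).2) else None.

Variable k : fieldType.

Definition pathalg := {malg k[qpath]}.

Definition pel (p : qpath) : pathalg := << p >>.
Definition pel_opt (o : option qpath) : pathalg :=
  if o is Some r then << r >> else 0.

Definition pmul (x y : pathalg) : pathalg :=
  \sum_(p <- msupp x) \sum_(q <- msupp y) (x@_p * y@_q) *: pel_opt (pcat p q).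

Definition pone : pathalg := \sum_(v : V) pel (vpath v).

Definition is_ideal (I : pathalg -> Prop) : Prop :=
  [/\ I 0, (forall x y, I x -> I y -> I (x + y)),
      (forall a x, I x -> I (a *: x)),
      (forall x y, I y -> I (pmul x y)) & (forall x y, I x -> I (pmul x y))].

Definition ideal_gen (S : pathalg -> Prop) : pathalg -> Prop :=
  fun x => forall J, is_ideal J -> (forall s, S s -> J s) -> J x.

Definition arrow_ideal : pathalg -> Prop :=
  ideal_gen (fun x => exists e : E, x = pel (apath e)).
Definition arrow_ideal2 : pathalg -> Prop :=
  ideal_gen (fun x => exists a b, arrow_ideal a /\ arrow_ideal b /\ x = pmul a b).

Definition is_quotient (I : pathalg -> Prop) (A : algType k) (pi : pathalg -> A) : Prop :=
  [/\ (forall a x y, pi (a *: x + y) = a *: pi x + pi y),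
      (forall x y, pi (pmul x y) = pi x * pi y),
      pi pone = 1,
      (forall z : A, exists x, pi x = z) &
      (forall x, pi x = 0 <-> I x)].

Definition is_diffop (A : algType k) (pi : pathalg -> A) (D : pathalg -> A) : Prop :=
  (forall a x y, D (a *: x + y) = a *: D x + D y) /\
  (forall x y, D (pmul x y) = D x * pi y + pi x * D y).

Definition Dm (A : algType k) (pi : pathalg -> A) (m : A) : pathalg -> A :=
  fun x => m * pi x - pi x * m.

Definition is_Drs (A : algType k) (pi : pathalg -> A) (r : E) (s : pathalg)
    (D : pathalg -> A) : Prop :=
  [/\ is_diffop pi D, D (pel (apath r)) = pi s,
      (forall e, e != r -> D (pel (apath e)) = 0) &
      (forall v, D (pel (vpath v)) = 0)].

End Quiver.

(* Main.v *)
Require Import Defs.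
From HB Require Import structures.
From mathcomp Require Import all_boot all_order all_algebra.
From mathcomp Require Import finmap.
From mathcomp.multinomials Require Import monalg.
Import GRing.Theory.
Local Open Scope ring_scope.
Set Implicit Arguments. Unset Strict Implicit.

Section Helpers.
Variables (V E : finType) (t h : E -> V) (k : fieldType).
Local Notation qp := (qpath t h).
Local Notation PA := (pathalg t h k).

Lemma pcatE (a b c : qp) : hP a = tP b ->
  val c = ((val a).1, (val a).2 ++ (val b).2) -> pcat a b = Some c.
Proof.
move=> Hab Hc; rewrite /pcat Hab eqxx.
case: insubP => [u _ Hu|Hn]; first by congr Some; apply: val_inj; rewrite Hu Hc.
by move: (valP c); rewrite Hc => /(negP Hn).
Qed.

Lemma pcatN (a b : qp) : hP a != tP b -> pcat a b = None.
Proof. by move=> H; rewrite /pcat (negbTE H). Qed.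

Lemma msupp_pel (a : qp) : msupp (pel k a) = [fset a]%fset.
Proof. rewrite /pel (msuppU a (1:k)) oner_eq0. reflexivity. Qed.
Lemma pel_coef (a : qp) : (pel k a)@_a = 1.
Proof. exact: mcoeffUU. Qed.
Lemma sum1 (a : qp) (F : qp -> PA) : \sum_(p <- [fset a]%fset) F p = F a.
Proof. rewrite big_seq_fset1. reflexivity. Qed.
Lemma pmul_pel (a b : qp) : pmul (pel k a) (pel k b) = pel_opt k (pcat a b).
Proof.
unfold pmul.
pose F := (fun p : qp => \sum_(q <- msupp (pel k b)) ((pel k a)@_p * (pel k b)@_q) *: pel_opt k (pcat p q)).
change (\sum_(p <- msupp (pel k a)) F p = pel_opt k (pcat a b)).
rewrite (msupp_pel a) sum1 /F (msupp_pel b) sum1 (pel_coef a) (pel_coef b) mulr1 scale1r.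
reflexivity.
Qed.

Lemma malgU_Z (c : k) (p : qp) : << c *g p >> = c *: pel k p.
Proof.
apply/malgP => d.
rewrite [RHS]mcoeffZ [LHS](mcoeffU p c d) /pel [X in _ * X](mcoeffU p (1:k) d).
rewrite mulr_natr. reflexivity.
Qed.

Variables (A : algType k) (pi : PA -> A).

Definition linD (D : PA -> A) := forall a x y, D (a *: x + y) = a *: D x + D y.
Definition leibD (D : PA -> A) := forall x y, D (pmul x y) = D x * pi y + pi x * D y.

Lemma linD0 D : linD D -> D 0 = 0.
Proof.
move=> HD; have H := HD 1 0 0; rewrite !scale1r addr0 in H.
by apply: (addrI (D 0)); rewrite addr0 -H.
Qed.

Lemma linDD D : linD D -> forall x y, D (x + y) = D x + D y.
Proof. move=> HD x y; have H := HD 1 x y; rewrite !scale1r in H; exact: H. Qed.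

Lemma linDZ D : linD D -> forall a x, D (a *: x) = a *: D x.
Proof. move=> HD a x; have H := HD a x 0; rewrite addr0 (linD0 HD) addr0 in H; exact: H. Qed.

Lemma diff_zero D : linD D -> leibD D ->
  (forall v, D (pel k (vpath t h v)) = 0) ->
  (forall e, D (pel k (apath t h e)) = 0) -> forall x, D x = 0.
Proof.
move=> Hl HL Hv He.
have Hp : forall p : qp, D (pel k p) = 0.
  case=> [[v s]] /=; elim: s v => [|e s IH] v Hvs.
    by rewrite -(Hv v); congr (D (pel k _)); apply: val_inj.
  have Hte : t e = v by move: Hvs; rewrite /valid_path /= => /andP[/eqP].
  have Hs : valid_path t h (h e, s).
    move: Hvs; rewrite /valid_path /=; case: s {IH} => [|e' s'] //=.
    by case/andP=> _ /andP[/eqP -> ->]; rewrite eqxx.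
  pose p : qp := exist _ (v, e :: s) Hvs.
  pose p' : qp := exist _ (h e, s) Hs.
  have Hc : pcat (apath t h e) p' = Some p.
    by apply: pcatE => //=; rewrite Hte.
  have -> : pel k p = pmul (pel k (apath t h e)) (pel k p') by rewrite pmul_pel Hc.
  have Hp' : D (pel k p') = 0 by apply: IH.
  have step : forall x y, D x = 0 -> D y = 0 -> D (pmul x y) = 0.
    by move=> x y Hx Hy; rewrite HL Hx Hy mul0r mulr0 addr0.
  exact: step (He e) Hp'.
move=> x; rewrite (monalgE x).
apply: (big_ind (fun y => D y = 0)); first exact: linD0.
  by move=> a b Ha Hb; rewrite linDD // Ha Hb addr0.
move=> p _.
rewrite (malgU_Z (x@_p) p) (linDZ Hl) (Hp p) scaler0. reflexivity.
Qed.

Lemma lin_sub D1 D2 : linD D1 -> linD D2 -> linD (fun x => D1 x - D2 x).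
Proof. move=> H1 H2 a x y; rewrite H1 H2 scalerBr opprD addrACA. reflexivity. Qed.

Lemma lin_sum (I : finType) (P : pred I) (F : I -> PA -> A) :
  (forall i, P i -> linD (F i)) -> linD (fun x => \sum_(i | P i) F i x).
Proof.
move=> H a x y; rewrite scaler_sumr -big_split; apply: eq_bigr => i Pi.
exact: H.
Qed.

Lemma lin_Dm m : (forall a x y, pi (a *: x + y) = a *: pi x + pi y) -> linD (Dm pi m).
Proof.
move=> Hl a x y; rewrite /Dm Hl mulrDr mulrDl -scalerAr -scalerAl scalerBr opprD addrACA.
reflexivity.
Qed.

Lemma leib_sub D1 D2 : leibD D1 -> leibD D2 -> leibD (fun x => D1 x - D2 x).
Proof. move=> H1 H2 x y; rewrite H1 H2 mulrBl mulrBr opprD addrACA. reflexivity. Qed.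

Lemma leib_sum (I : finType) (P : pred I) (F : I -> PA -> A) :
  (forall i, P i -> leibD (F i)) -> leibD (fun x => \sum_(i | P i) F i x).
Proof.
move=> H x y; rewrite mulr_suml mulr_sumr -big_split; apply: eq_bigr => i Pi.
exact: H.
Qed.

Lemma leib_Dm m : (forall x y, pi (pmul x y) = pi x * pi y) -> leibD (Dm pi m).
Proof.
move=> Hm x y; rewrite /Dm Hm mulrBl mulrBr !mulrA addrA subrK. reflexivity.
Qed.

Lemma comm_cancel (Hm : forall x y, pi (pmul x y) = pi x * pi y) (x y : PA) :
  pmul x y = pmul y x -> pi x * pi y - pi y * pi x = 0.
Proof. move=> H; rewrite -(Hm x y) -(Hm y x) H subrr. reflexivity. Qed.

Lemma arrow_fin (Hm : forall x y, pi (pmul x y) = pi x * pi y) (x y : PA) :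
  pi x * pi y - pi y * pi x - (pi (pmul x y) - pi (pmul y x)) = 0.
Proof. rewrite -(Hm x y) -(Hm y x) subrr. reflexivity. Qed.

End Helpers.

Theorem proposition3p1 (k : fieldType) (V E : finType) (t h : E -> V)
  (Hconn : quiver_connected t h)
  (I : pathalg t h k -> Prop)
  (HI : is_ideal I)
  (HIR2 : forall x, I x -> arrow_ideal2 x)
  (A : algType k) (pi : pathalg t h k -> A)
  (Hpi : is_quotient I pi)
  (v0 : V) (q : qpath t h) (Hqt : tP q = v0) (Hqh : hP q = v0)
  (Dt : E -> pathalg t h k -> A)
  (HDt : forall p : E, t p = v0 ->
           is_Drs pi p (pel_opt k (pcat q (apath t h p))) (Dt p))
  (Dh : E -> pathalg t h k -> A)
  (HDh : forall r : E, h r = v0 ->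
           is_Drs pi r (pel_opt k (pcat (apath t h r) q)) (Dh r)) :
  forall x : pathalg t h k,
    Dm pi (pi (pel k q)) x =
    \sum_(p : E | t p == v0) Dt p x - \sum_(r : E | h r == v0) Dh r x.
Proof.
move=> x.
case: Hpi => Hlin Hmul Hone Hsurj Hker.
have Hpi0 : pi 0 = 0 by apply/Hker; case: HI.
apply/eqP; rewrite -subr_eq0; apply/eqP.
apply: (@diff_zero _ _ t h k A pi
  (fun y => Dm pi (pi (pel k q)) y -
     (\sum_(p : E | t p == v0) Dt p y - \sum_(r : E | h r == v0) Dh r y))).
- apply: lin_sub; first exact: lin_Dm.
  apply: lin_sub; apply: lin_sum => i /eqP Hi.
    by case: (HDt i Hi) => [[]].
  by case: (HDh i Hi) => [[]].
- apply: leib_sub; first exact: leib_Dm.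
  apply: leib_sub; apply: leib_sum => i /eqP Hi.
    by case: (HDt i Hi) => [[]].
  by case: (HDh i Hi) => [[]].
- move=> v /=.
  have S1 : \sum_(p : E | t p == v0) Dt p (pel k (vpath t h v)) = 0.
    by apply: big1 => p /eqP Hp; case: (HDt p Hp) => _ _ _ H4; exact: H4.
  have S2 : \sum_(p : E | h p == v0) Dh p (pel k (vpath t h v)) = 0.
    by apply: big1 => p /eqP Hp; case: (HDh p Hp) => _ _ _ H4; exact: H4.
  rewrite S1 S2 subrr subr0 /Dm.
  have Hc : pcat q (vpath t h v) = pcat (vpath t h v) q.
    have [Hv|Hv] := eqVneq v v0.
      have N1 : pcat q (vpath t h v) = Some q.
        apply: pcatE; first by rewrite Hqh Hv.
        by rewrite cats0; case: (val q).
      have N2 : pcat (vpath t h v) q = Some q.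
        apply: pcatE; first by rewrite Hqt Hv.
        rewrite /= Hv -Hqt /tP; exact: surjective_pairing.
      by rewrite [LHS]N1 [RHS]N2.
    have N1 : pcat q (vpath t h v) = None.
      by apply: pcatN; rewrite Hqh /tP /= eq_sym.
    have N2 : pcat (vpath t h v) q = None.
      by apply: pcatN; rewrite Hqt /hP /=.
    by rewrite [LHS]N1 [RHS]N2.
  apply: (comm_cancel Hmul).
  rewrite [LHS]pmul_pel [RHS]pmul_pel.
  exact: (congr1 (pel_opt k) Hc).
- move=> e /=.
  have S1 : \sum_(p : E | t p == v0) Dt p (pel k (apath t h e)) =
            pi (pmul (pel k q) (pel k (apath t h e))).
    rewrite pmul_pel.
    have [He|He] := eqVneq (t e) v0.
      rewrite (bigD1 e) /=; last by rewrite He.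
      case: (HDt e He) => _ H2 _ _; rewrite H2.
      rewrite big1 ?addr0 //.
      move=> p /andP[/eqP Hp Hpe]; case: (HDt p Hp) => _ _ H3 _.
      by apply: H3; rewrite eq_sym.
    rewrite big1; last first.
      move=> p /eqP Hp; case: (HDt p Hp) => _ _ H3 _; apply: H3.
      by apply/eqP => Hep; move: He; rewrite Hep Hp eqxx.
    have N : pcat q (apath t h e) = None.
      by apply: pcatN; rewrite Hqh /tP /= eq_sym.
    by rewrite N /= Hpi0.
  have S2 : \sum_(p : E | h p == v0) Dh p (pel k (apath t h e)) =
            pi (pmul (pel k (apath t h e)) (pel k q)).
    rewrite pmul_pel.
    have [He|He] := eqVneq (h e) v0.
      rewrite (bigD1 e) /=; last by rewrite He.
      case: (HDh e He) => _ H2 _ _; rewrite H2.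
      rewrite big1 ?addr0 //.
      move=> p /andP[/eqP Hp Hpe]; case: (HDh p Hp) => _ _ H3 _.
      by apply: H3; rewrite eq_sym.
    rewrite big1; last first.
      move=> p /eqP Hp; case: (HDh p Hp) => _ _ H3 _; apply: H3.
      by apply/eqP => Hep; move: He; rewrite Hep Hp eqxx.
    have N : pcat (apath t h e) q = None.
      by apply: pcatN; rewrite Hqt /hP /=.
    by rewrite N /= Hpi0.
  rewrite S1 S2 /Dm.
  exact: arrow_fin.
Qed.
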